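(* Every finite monoid is sofic.
   Context: For a non-empty finite set $X$, $\mathrm{Map}(X)$ is the monoid of all maps $X\to X$ under composition (identity $\mathrm{Id}_X$) with the Hamming metric $d_X(f,g)=|\{x\in X : f(x)\ne g(x)\}|/|X|$. For a monoid $M$ with identity $1_M$, finite $K\subset M$ and $\varepsilon,\alpha>0$, a map $\varphi\colon M\to\mathrm{Map}(X)$ is a $(K,\varepsilon)$-morphism if $d_X(\varphi(k_1k_2),\varphi(k_1)\varphi(k_2))\le\varepsilon$ for all $k_1,k_2\in K$ and $d_X(\varphi(1_M),\mathrm{Id}_X)\le\varepsilon$; it is $(K,\alpha)$-injective if $d_X(\varphi(k_1),\varphi(k_2))\ge\alpha$ for all distinct $k_1,k_2\in K$. $M$ is sofic if for every finite $K\subset M$ and every $\varepsilon>0$ there exist a non-empty finite set $X$ and a $(K,1-\varepsilon)$-injective $(K,\varepsilon)$-morphism $\varphi\colon M\to\mathrm{Map}(X)$. *)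

(* Defs.v *)
From Stdlib Require List.
From mathcomp Require Import all_boot all_order all_algebra.
Set Implicit Arguments. Unset Strict Implicit. Unset Printing Implicit Defensive.
Import Order.TTheory GRing.Theory Num.Theory.
Local Open Scope ring_scope.

Record monoid := Monoid {
  mcarrier :> Type;
  mmul : mcarrier -> mcarrier -> mcarrier;
  mone : mcarrier;
  mmulA : forall a b c, mmul a (mmul b c) = mmul (mmul a b) c;
  mmul1m : forall a, mmul mone a = a;
  mmulm1 : forall a, mmul a mone = a }.

Definition finite_monoid (M : monoid) : Prop :=
  exists s : seq M, forall x : M, List.In x s.

Definition mapcomp (X : finType) (f g : X -> X) : X -> X := fun x => f (g x).

Definition hamming (R : numFieldType) (X : finType) (f g : X -> X) : R :=
  (#|[pred x | f x != g x]|%:R) / (#|X|%:R).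

Definition Keps_morphism (R : numFieldType) (M : monoid) (X : finType)
    (K : seq M) (eps : R) (phi : M -> X -> X) : Prop :=
  (forall k1 k2, List.In k1 K -> List.In k2 K ->
     hamming R (phi (mmul k1 k2)) (mapcomp (phi k1) (phi k2)) <= eps) /\
  hamming R (phi (mone M)) id <= eps.

Definition Kalpha_injective (R : numFieldType) (M : monoid) (X : finType)
    (K : seq M) (alpha : R) (phi : M -> X -> X) : Prop :=
  forall k1 k2, List.In k1 K -> List.In k2 K -> k1 <> k2 ->
     alpha <= hamming R (phi k1) (phi k2).

Definition sofic (R : numFieldType) (M : monoid) : Prop :=
  forall (K : seq M) (eps : R), 0 < eps ->
    exists (X : finType) (phi : M -> X -> X),
      (0 < #|X|)%N /\ Kalpha_injective K (1 - eps) phi /\ Keps_morphism K eps phi.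

(* Main.v *)
Require Import Defs.
From mathcomp Require Import all_boot all_order all_algebra.
From mathcomp Require Import reals.
From mathcomp Require Import zify ring lra.
From Stdlib Require Import ClassicalEpsilon.
Import Order.TTheory GRing.Theory Num.Theory.
Local Open Scope ring_scope.

Lemma bern (d N : nat) : (d ^ N * (d + N) <= (d.+1) ^ N * d)%N.
Proof.
elim: N => [|N IH]; first by rewrite !expn0 addn0.
rewrite !expnS.
have h1 : (d ^ N <= d.+1 ^ N)%N by case: (N) => [|n] //; rewrite leq_exp2r.
nia.
Qed.

Lemma small_pow (R : realType) (d : nat) (eps : R) : 0 < eps ->
  exists N : nat, (d ^ N)%:R <= eps * ((d.+1) ^ N)%:R :> R.
Proof.
move=> he.
have h0 : 0 <= d%:R / eps :> R by apply: divr_ge0 => //; exact: ltW.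
have := archi_boundP h0; set N := Num.Def.archi_bound _ => hN.
exists N.
have hb := bern d N.
have hb' : (d ^ N)%:R * (d + N)%:R <= ((d.+1) ^ N)%:R * d%:R :> R.
  by rewrite -!natrM ler_nat.
have hNe : d%:R <= eps * N%:R :> R.
  by rewrite -ler_pdivrMl // mulrC; apply: ltW.
have hnpos : 0 < N%:R :> R by apply: le_lt_trans hN.
move: hb' hNe hnpos he.
set a := (d ^ N)%:R; set b := ((d.+1) ^ N)%:R; set x := d%:R; set n := N%:R.
have ha : 0 <= a :> R by []. have hb0 : 0 <= b :> R by []. have hx : 0 <= x :> R by [].
rewrite natrD -/x -/n => h1 h2 h3 h4.
have h5 : a * n <= (eps * b) * n by nra.
by rewrite ler_pM2r in h5.
Qed.

Lemma ham0 (R : numFieldType) (X : finType) (f g : X -> X) :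
  (forall x, f x = g x) -> hamming R f g = 0.
Proof.
move=> h; rewrite /hamming.
have -> : #|[pred x | f x != g x]| = 0%N.
  by apply: eq_card0 => x; rewrite inE h eqxx.
by rewrite mul0r.
Qed.

Lemma in_nth_ex (T : Type) (d : T) (s : seq T) (x : T) :
  List.In x s -> exists i, (i < size s)%N /\ nth d s i = x.
Proof.
elim: s => [|y s IH] //= [->|h]; first by exists 0%N.
by have [i [hi hx]] := IH h; exists i.+1.
Qed.

Lemma expn_mono (a b N : nat) : (a <= b)%N -> (a ^ N <= b ^ N)%N.
Proof. by move=> h; elim: N => [|N IH] //; rewrite !expnS leq_mul. Qed.

Theorem proposition4p1 (R : realType) (M : monoid) :
  finite_monoid M -> sofic R M.
Proof.
move=> [s hs] K eps he.
pose n := size s.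
pose e (i : 'I_n) : M := nth (mone M) s i.
have hr : forall x : M, {i : 'I_n | e i = x}.
  move=> x; apply: constructive_indefinite_description.
  have [i [hi hx]] := @in_nth_ex _ (mone M) _ _ (hs x).
  by exists (Ordinal hi).
pose r (x : M) : 'I_n := proj1_sig (hr x).
have er : forall x, e (r x) = x by move=> x; rewrite /r; case: (hr x).
pose X0 : finType := {i : 'I_n | r (e i) == i}.
have actP : forall k (y : X0), r (e (r (mmul k (e (val y))))) == r (mmul k (e (val y))).
  by move=> k y; rewrite er.
pose act k (y : X0) : X0 := exist (fun i => r (e i) == i) _ (actP k y).
have y1P : r (e (r (mone M))) == r (mone M) by rewrite er.
pose y1 : X0 := exist (fun i => r (e i) == i) _ y1P.
have m_gt0 : (0 < #|X0|)%N by apply/card_gt0P; exists y1.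
pose d := #|X0|.-1.
have [N hN] := @small_pow R d eps he.
pose X : finType := {ffun 'I_N -> X0}.
pose phi k (f : X) : X := [ffun i => act k (f i)].
exists X, phi.
have actE : forall k y, val (act k y) = r (mmul k (e (val y))) by [].
have phiM : forall k1 k2 f, phi (mmul k1 k2) f = mapcomp (phi k1) (phi k2) f.
  move=> k1 k2 f; apply/ffunP => i; rewrite /mapcomp !ffunE.
  by apply: val_inj; rewrite !actE er mmulA.
have phi1 : forall f, phi (mone M) f = f.
  move=> f; apply/ffunP => i; rewrite !ffunE; apply: val_inj.
  by rewrite actE mmul1m; apply/eqP; case: (f i).
split; first by rewrite card_ffun expn_gt0 m_gt0.
split; last first.
  split; last by rewrite ham0 // ltW.
  by move=> k1 k2 _ _; rewrite ham0 // ltW.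
move=> k1 k2 _ _ hne.
pose A := [pred y : X0 | act k1 y == act k2 y].
have hA : (#|A| <= d)%N.
  rewrite /d -(cardC1 y1); apply: subset_leq_card; apply/subsetP => y.
  rewrite !inE; apply: contraTN => /eqP ->.
  apply/negP => /eqP /(congr1 val); rewrite !actE er !mmulm1 => /(congr1 e).
  by rewrite !er.
have hE : [pred f | phi k1 f != phi k2 f] =i [predC ffun_on A].
  move=> f; rewrite !inE; congr negb.
  apply/eqP/ffun_onP => [h i | h].
    by have := congr1 (fun g : X => g i) h; rewrite /= !ffunE inE => ->.
  by apply/ffunP => i; rewrite !ffunE; apply/eqP; apply: h.
rewrite /hamming (eq_card hE).
have hC := @cardC X (ffun_on A).
rewrite card_ffun_on card_ord in hC.

have hX : #|X| = (d.+1 ^ N)%N by rewrite card_ffun card_ord /d prednK.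
have hAN := expn_mono _ _ N hA.
move: hC hAN; rewrite hX.
set c := #|[predC ffun_on A]|; set aN := (#|A| ^ N)%N => hC hAN.
have hT : 0 < (d.+1 ^ N)%:R :> R by rewrite ltr0n expn_gt0.
rewrite ler_pdivlMr //.
have hC' : aN%:R + c%:R = (d.+1 ^ N)%:R :> R by rewrite -natrD hC.
have hAN' : aN%:R <= (d ^ N)%:R :> R by rewrite ler_nat.
rewrite -hC' in hN *.
have h2 : aN%:R <= eps * (aN%:R + c%:R) :> R := le_trans hAN' hN.
rewrite mulrBl mul1r lerBlDr.
by rewrite [c%:R + _]addrC lerD2r.
Qed.
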